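(* Let $k$ be an odd positive integer and $\mu, n$ positive integers with $2\mu$ and $n$ coprime, and suppose there is an integer $s$ with \[ k^4\mu^4 n^4 - 16k(4\mu^2+n^2) = s^2. \] Then $(k, \mu, n) = (5, 1, 1)$. *)

(* Defs.v *)
From Stdlib Require Import ZArith Znumtheory.

(* Main.v *)
From Stdlib Require Import ZArith Znumtheory Lia.
Open Scope Z_scope. Open Scope bool_scope.
Fixpoint allr (n : nat) (f : Z -> bool) : bool :=
  match n with O => true | S m => f (Z.of_nat m) && allr m f end.
Lemma allr_ok n f : allr n f = true -> forall z, 0 <= z < Z.of_nat n -> f z = true.
Proof.
  induction n as [|m IH]; simpl; intros H z Hz; [lia|].
  apply andb_prop in H as [H1 H2].
  destruct (Z.eq_dec z (Z.of_nat m)) as [->|]; auto. apply IH; auto. lia.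
Qed.
Definition chk (k x mu n : Z) : bool :=
  if (x * (k*k*mu*mu*n*n - x) =? 4*k*(4*mu*mu+n*n)) then
   if (0 <? x) && (0<? mu) && (0<?n) && (Z.gcd (2*mu) n =? 1) then (k =? 5) && (mu =? 1) && (n =? 1) else true
  else true.
Lemma big_ok : allr 41 (fun k => if Z.odd k then allr 41 (fun x => allr 48 (fun mu => allr 48 (fun n => chk k x mu n))) else true) = true.
Proof. vm_compute. reflexivity. Qed.

Lemma bounds (k x mu n : Z) : 0 < k -> 0 < x -> 0 < mu -> 0 < n ->
  x * (k*k*mu*mu*n*n - x) = 4*k*(4*mu*mu+n*n) -> 2*x <= k*k*mu*mu*n*n ->
  k < 41 /\ x < 41 /\ mu < 48 /\ n < 48.
Proof.
  intros Hk Hx Hm Hn E L.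
  set (a := k*mu*mu). set (b := k*n*n).
  assert (Hmm : 1 <= mu*mu) by nia. assert (Hnn : 1 <= n*n) by nia.
  assert (Ha : k <= a) by (unfold a; rewrite <- Z.mul_assoc; nia).
  assert (Hb : k <= b) by (unfold b; rewrite <- Z.mul_assoc; nia).
  assert (E2 : x*a*b = x*x + 16*a + 4*b) by (unfold a, b; nia).
  assert (L2 : 2*x <= a*b) by (unfold a, b; nia).
  assert (B : x*a*b <= 32*a + 8*b) by nia.
  destruct (Z_le_gt_dec b a) as [Hab|Hab].
  - assert (Hxb : x*b <= 40) by nia.
    assert (Hxb2 : 17 <= x*b) by nia.
    assert (a <= x*x + 4*b) by nia.
    assert (x <= 40) by nia. assert (b <= 40) by nia.
    assert (a <= 1760) by nia.
    unfold a, b in *. repeat split; nia.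
  - assert (Hxa : x*a <= 40) by nia.
    assert (Hxa2 : 5 <= x*a) by nia.
    assert (b <= x*x + 16*a) by nia.
    assert (x <= 40) by nia. assert (a <= 40) by nia.
    assert (b <= 2240) by nia.
    unfold a, b in *. repeat split; nia.
Qed.

Theorem theorem8 (k mu n : Z) :
  0 < k -> Z.odd k = true -> 0 < mu -> 0 < n ->
  Z.gcd (2 * mu) n = 1 ->
  (exists s : Z, k^4 * mu^4 * n^4 - 16 * k * (4 * mu^2 + n^2) = s^2) ->
  k = 5 /\ mu = 1 /\ n = 1.
Proof.
  intros Hk Ho Hm Hn Hg [s0 Hs0].
  set (A := k*k*mu*mu*n*n).
  assert (HA : 0 < A) by (unfold A; nia).
  set (s := Z.abs s0).
  assert (Hs : A*A - 16*k*(4*mu*mu+n*n) = s*s).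
  { unfold s, A. rewrite Z.abs_square. replace (s0*s0) with (s0^2) by ring. rewrite <- Hs0. ring. }
  assert (Hs0' : 0 <= s) by (unfold s; lia).
  assert (HsA : s < A) by nia.
  destruct (Z.Even_or_Odd A) as [[m Hm']|[m Hm']]; destruct (Z.Even_or_Odd s) as [[p Hp]|[p Hp]].
  2,3: exfalso; rewrite Hm', Hp in Hs; ring_simplify in Hs; lia.
  all: set (x := m - p).
  all: assert (Ex0 : 4*(x * (A - x)) = A*A - s*s) by (unfold x; rewrite Hm', Hp; ring).
  all: assert (Ex : x * (A - x) = 4*k*(4*mu*mu+n*n)) by lia.
  all: assert (Lx : 2*x <= A) by (unfold x; lia).
  all: assert (Px : 0 < x) by (unfold x; lia).
  all: unfold A in *.
  all: destruct (bounds k x mu n Hk Px Hm Hn Ex Lx) as (B1 & B2 & B3 & B4).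
  all: pose proof (allr_ok _ _ big_ok k ltac:(cbn [Z.of_nat Pos.of_succ_nat Pos.succ]; lia)) as C; cbv beta in C; rewrite Ho in C.
  all: pose proof (allr_ok _ _ C x ltac:(cbn [Z.of_nat Pos.of_succ_nat Pos.succ]; lia)) as C1; cbv beta in C1.
  all: pose proof (allr_ok _ _ C1 mu ltac:(cbn [Z.of_nat Pos.of_succ_nat Pos.succ]; lia)) as C2; cbv beta in C2.
  all: pose proof (allr_ok _ _ C2 n ltac:(cbn [Z.of_nat Pos.of_succ_nat Pos.succ]; lia)) as C3; unfold chk in C3.
  all: rewrite (proj2 (Z.eqb_eq _ _) Ex) in C3.
  all: rewrite Hg in C3.
  all: rewrite (proj2 (Z.ltb_lt _ _) Px), (proj2 (Z.ltb_lt _ _) Hm), (proj2 (Z.ltb_lt _ _) Hn) in C3.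
  all: simpl in C3.
  all: rewrite !Bool.andb_true_iff, !Z.eqb_eq in C3; tauto.
Qed.
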